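(* Let $\vec\lambda,\vec\mu\in\mathcal P_{m,\ell}$ with $\|\vec\lambda\|=\|\vec\mu\|$. Fix $\lambda\in\mathfrak S\cdot\vec\lambda^{\mathtt{tot}}$, where $\mathfrak S=(\mathfrak S_n)^{\ell}\subset\mathfrak S_{n\ell}$ (the $k$-th factor permuting the indices $(k-1)n+1,\dots,kn$) acts on $\mathbb Z^{n\ell}$ by permuting coordinates. If $\vec\mu^{\mathtt{tot}}\in\lambda+\mathbb Z^{n\ell}_+$, then $\vec\mu\unlhd\vec\lambda$.
   Context: Fix integers $\ell>1$, $n\ge m\ge1$. Partitions have at most $n$ parts, written $\lambda=(\lambda_1\ge\dots\ge\lambda_n\ge0)$; the dominance order on partitions of $m$ is $\lambda\le\mu$ iff $\sum_{j\le k}\lambda_j\le\sum_{j\le k}\mu_j$ for all $k$. An $\ell$-partition of $m$ is $\vec\lambda=(\lambda^{(1)},\dots,\lambda^{(\ell)})$ with $\sum_k|\lambda^{(k)}|=m$; $\mathcal P_{m,\ell}$ denotes the set of these. Define $\vec\lambda^{\mathtt{tot}}\in\mathbb Z_{\ge0}^{n\ell}$ as the concatenation $(\lambda^{(1)}_n,\lambda^{(1)}_{n-1},\dots,\lambda^{(1)}_1,\lambda^{(2)}_n,\dots,\lambda^{(2)}_1,\dots,\lambda^{(\ell)}_n,\dots,\lambda^{(\ell)}_1)$, and $\|\vec\lambda\|$ as the partition of $m$ obtained by sorting all parts of all $\lambda^{(k)}$. With $\{\varepsilon_i\}$ the standard basis of $\mathbb Z^{n\ell}$, let $\mathbb Z^{n\ell}_+=\big(\sum_{1\le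 i<j\le n\ell}\mathbb Z_{\ge0}(\varepsilon_i-\varepsilon_j)\big)\setminus\{0\}$. Define $\vec\lambda\lhd\vec\mu$ iff either $\|\vec\lambda\|<\|\vec\mu\|$ (strictly in dominance), or $\|\vec\lambda\|=\|\vec\mu\|$ and $\vec\lambda^{\mathtt{tot}}-\vec\mu^{\mathtt{tot}}\in\mathbb Z^{n\ell}_+$; $\unlhd$ means $\lhd$ or $=$. *)

(* Defs.v *)
From HB Require Import structures.
From mathcomp Require Import all_boot all_order all_algebra all_fingroup.
Set Implicit Arguments. Unset Strict Implicit. Unset Printing Implicit Defensive.
Import GRing.Theory Num.Theory.

(* An l-tuple of partitions with at most n parts: lam k i = lambda^(k+1)_(i+1)
   (everything 0-indexed). *)
Definition lpart (l n : nat) := 'I_l -> 'I_n -> nat.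

Definition is_partition n (p : 'I_n -> nat) : Prop :=
  forall i j : 'I_n, i <= j -> p j <= p i.

Definition is_lpartition (l n m : nat) (lam : lpart l n) : Prop :=
  (forall k, is_partition (lam k)) /\ \sum_(k < l) \sum_(i < n) lam k i = m.

(* ||vec lambda||: all parts of all components, sorted decreasingly
   (padded with zeros; length l*n) *)
Definition lnorm l n (lam : lpart l n) : seq nat :=
  sort geq [seq lam ki.1 ki.2 | ki <- enum {: 'I_l * 'I_n}].

Definition dom_le (s t : seq nat) : Prop :=
  forall k, \sum_(x <- take k s) x <= \sum_(x <- take k t) x.
Definition dom_lt (s t : seq nat) : Prop := dom_le s t /\ s <> t.

(* Index arithmetic for Z^{n l}: position p (0-indexed) = k*n + i *)
Lemma tot_div_lt l n (p : 'I_(l * n)) : p %/ n < l.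
Proof.
case: n p => [|n] [p hp] /=; first by move: hp; rewrite muln0.
by rewrite ltn_divLR.
Qed.

Lemma tot_mod_lt l n (p : 'I_(l * n)) : p %% n < n.
Proof.
case: n p => [|n] [p hp] /=; first by move: hp; rewrite muln0.
by rewrite ltn_pmod.
Qed.

Lemma tot_rev_lt n (i : nat) : i < n -> n.-1 - i < n.
Proof. by case: n => // n _; rewrite ltnS leq_subr. Qed.

(* vec lambda^tot = (lam^(1)_n, ..., lam^(1)_1, ..., lam^(l)_n, ..., lam^(l)_1):
   coordinate k*n + i (0-indexed) is lambda^(k+1)_(n-i), i.e. lam k (n-1-i). *)
Definition tot l n (lam : lpart l n) (p : 'I_(l * n)) : nat :=
  lam (Ordinal (tot_div_lt p))
      (Ordinal (tot_rev_lt (tot_mod_lt p))).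

Definition Zplus N (v : 'I_N -> int) : Prop :=
  (exists c : 'I_N -> 'I_N -> nat,
     forall p : 'I_N,
       v p = (\sum_(i : 'I_N) \sum_(j : 'I_N | (i < j)%N)
               (c i j)%:Z * ((p == i)%:Z - (p == j)%:Z))%R)
  /\ (exists p, v p != 0%R).

Definition llt l n (lam mu : lpart l n) : Prop :=
  dom_lt (lnorm lam) (lnorm mu) \/
  (lnorm lam = lnorm mu /\
   Zplus (fun p => ((tot lam p)%:Z - (tot mu p)%:Z)%R)).

Definition lle l n (lam mu : lpart l n) : Prop := llt lam mu \/ lam = mu.

(* sigma in (S_n)^l inside S_{nl}: permutations preserving each block *)
Definition block_perm l n (s : {perm 'I_(l * n)}) : Prop :=
  forall p : 'I_(l * n), s p %/ n = p %/ n.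

(* Main.v *)
Require Import Defs.
From HB Require Import structures.
From mathcomp Require Import all_boot all_order all_algebra all_fingroup.
From mathcomp Require Import zify.
From Stdlib Require Import FunctionalExtensionality.
Import GRing.Theory Num.Theory.

Lemma sum_delta N (a : nat) (F : nat -> int) :
  (\sum_(j : 'I_N) ((nat_of_ord j == a)%:Z * F j) = (a < N)%:Z * F a)%R.
Proof.
case: (ltnP a N) => ha.
- rewrite (bigD1 (Ordinal ha)) //= eqxx mul1r big1 ?addr0 ?mul1r // => j hj.
  have -> : (nat_of_ord j == a) = false.
    by apply/negbTE; apply: contra hj => /eqP e; apply/eqP/val_inj.
  by rewrite mul0r.
- rewrite mul0r big1 // => j _.
  have -> : (nat_of_ord j == a) = false.
    by apply/negbTE; rewrite neq_ltn (leq_trans (ltn_ord j) ha).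
  by rewrite mul0r.
Qed.

Lemma cone_of_prefix N (v : 'I_N -> int) :
  (forall k, (0 <= \sum_(p : 'I_N | (p < k)%N) v p)%R) ->
  (\sum_(p : 'I_N) v p = 0)%R ->
  exists c : 'I_N -> 'I_N -> nat, forall p : 'I_N,
    v p = (\sum_(i : 'I_N) \sum_(j : 'I_N | (i < j)%N)
               (c i j)%:Z * ((p == i)%:Z - (p == j)%:Z))%R.
Proof.
move=> hpos htot.
pose P k := (\sum_(p : 'I_N | (p < k)%N) v p)%R.
have P0 : P 0 = 0%R by rewrite /P big1 // => i; rewrite ltn0.
have PN : P N = 0%R by rewrite /P -[RHS]htot; apply: eq_bigl => p; exact: ltn_ord.
have PS : forall p : 'I_N, v p = (P p.+1 - P p)%R.
  move=> p; rewrite /P (bigD1 p) //= (eq_bigl (fun q : 'I_N => (q < p)%N)) ?addrK //.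
  by move=> q; rewrite ltnS [(q < p)%N]ltn_neqAle andbC.
pose c (i j : 'I_N) := ((nat_of_ord j == i.+1) * absz (P j))%N.
have cE : forall i j, ((c i j)%:Z = (nat_of_ord j == i.+1)%:Z * P j)%R.
  by move=> i j; rewrite /c PoszM; congr (_ * _)%R; rewrite abszE ger0_norm //; exact: hpos.
have hB : forall q : 'I_N, (\sum_i (c i q)%:Z)%R = P q.
  case=> [[|q] hq] /=.
    by rewrite P0 big1 // => i _; rewrite cE.
  rewrite (eq_bigr (fun i : 'I_N => (nat_of_ord i == q)%:Z * P q.+1)%R).
    by rewrite (sum_delta N q (fun _ => P q.+1)) (ltnW hq) mul1r.
  by move=> i *; rewrite cE /= eqSS eq_sym.
have hA : forall q : 'I_N, (\sum_j (c q j)%:Z)%R = P q.+1.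
  move=> q; rewrite (eq_bigr (fun j : 'I_N => (nat_of_ord j == q.+1)%:Z * P j)%R).
    rewrite sum_delta; case: ltnP => h; first by rewrite mul1r.
    have -> : q.+1 = N by apply/eqP; rewrite eqn_leq h ltn_ord.
    by rewrite PN mul0r.
  by move=> j *; rewrite cE.
exists c => p.
have -> : (\sum_(i : 'I_N) \sum_(j : 'I_N | (i < j)%N)
               (c i j)%:Z * ((p == i)%:Z - (p == j)%:Z) =
           \sum_(i : 'I_N) \sum_(j : 'I_N)
               (c i j)%:Z * ((p == i)%:Z - (p == j)%:Z))%R.
  apply: eq_bigr => i _; rewrite big_mkcond; apply: eq_bigr => j _.
  case: ifP => // hij; rewrite cE.
  have -> : (nat_of_ord j == i.+1) = false.
    by apply/negbTE; apply: contraFN hij => /eqP ->.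
  by rewrite !mul0r.
transitivity (\sum_i (\sum_j (c i j)%:Z * (p == i)%:Z) -
              \sum_i \sum_j (c i j)%:Z * (p == j)%:Z)%R; last first.
  rewrite -sumrB; apply: eq_bigr => i _; rewrite -sumrB; apply: eq_bigr => j _.
  by rewrite mulrBr.
rewrite PS; congr (_ - _)%R.
- rewrite -hA [RHS](bigD1 p) //= [X in (_ + X)%R]big1 ?addr0.
    by apply: eq_bigr => j _; rewrite eqxx mulr1.
  move=> i hi; rewrite big1 // => j _.
  by rewrite eq_sym (negbTE hi) mulr0.
- rewrite -hB; apply: eq_bigr => i _.
  rewrite (bigD1 p) //= eqxx mulr1 big1 ?addr0 // => j hj.
  by rewrite eq_sym (negbTE hj) mulr0.
Qed.

Lemma rearr N n (s : {perm 'I_N}) (x : 'I_N -> nat)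
  (hs : forall p, s p %/ n = p %/ n)
  (hx : forall p q : 'I_N, p %/ n = q %/ n -> p <= q -> x p <= x q) (k : nat) :
  \sum_(p : 'I_N | p < k) x p <= \sum_(p : 'I_N | p < k) x (s p).
Proof.
pose K := [set p : 'I_N | p < k].
pose S := [set s p | p in K].
have injs : injective s := @perm_inj _ s.
have -> : \sum_(p : 'I_N | p < k) x (s p) = \sum_(q in S) x q.
  rewrite big_imset /=; last by move=> a b _ _; apply: injs.
  by apply: eq_bigl => p; rewrite inE.
have -> : \sum_(p : 'I_N | p < k) x p = \sum_(p in K) x p.
  by apply: eq_bigl => p; rewrite inE.
rewrite (big_setID (A:=K) S) (big_setID (A:=S) K) setIC leq_add2l.
have key : forall a b, a \in K :\: S -> b \in S :\: K -> x a <= x b.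
  move=> a b; rewrite !inE => /andP[haS haK] /andP[hbK hbS].
  case/imsetP: hbS => p' hp' E; rewrite inE in hp'; subst b.
  have ha' : k <= (s^-1 a)%g.
    rewrite leqNgt; apply: contra haS => h; apply/imsetP; exists (s^-1 a)%g.
      by rewrite inE.
    by rewrite permKV.
  rewrite -leqNgt in hbK.
  apply: hx.
  - apply/eqP; rewrite eqn_leq; apply/andP; split.
      by apply: leq_div2r; apply: ltnW; apply: leq_trans hbK.
    rewrite hs; have := hs (s^-1 a)%g; rewrite permKV => ->; apply: leq_div2r.
    by apply: ltnW; apply: leq_trans ha'.
  - by apply: ltnW; apply: leq_trans hbK.
pose m := \max_(a in K :\: S) x a.
apply: (@leq_trans (#|K :\: S| * m)).
  by rewrite -sum_nat_const; apply: leq_sum => a ha; exact: leq_bigmax_cond.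
have hc : #|K :\: S| = #|S :\: K|.
  have h1 := cardsID S K; have h2 := cardsID K S.
  have h3 : #|S| = #|K| by rewrite card_imset.
  by rewrite setIC in h2; apply/eqP; rewrite -(eqn_add2l #|K :&: S|) h1 h2 h3.
rewrite hc -sum_nat_const; apply: leq_sum => b hb; apply/bigmax_leqP => a ha.
exact: key.
Qed.

Lemma tot_mono l n (lam : lpart l n) : (forall k, is_partition (lam k)) ->
  forall p q : 'I_(l * n), p %/ n = q %/ n -> p <= q -> tot lam p <= tot lam q.
Proof.
move=> hp p q hpq hle; rewrite /tot.
have -> : Ordinal (tot_div_lt p) = Ordinal (tot_div_lt q) by apply: val_inj.
apply: hp => /=; apply: leq_sub2l.
by move: hle; rewrite {1}(divn_eq p n) {1}(divn_eq q n) hpq leq_add2l.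
Qed.

Lemma tot_inj l n (lam mu : lpart l n) : (forall p, tot mu p = tot lam p) -> mu = lam.
Proof.
move=> h; apply: functional_extensionality => k; apply: functional_extensionality => i.
have hn : 0 < n := leq_ltn_trans (leq0n i) (ltn_ord i).
have hr : n.-1 - i < n := tot_rev_lt (ltn_ord i).
have hp : k * n + (n.-1 - i) < l * n.
  have hk := ltn_ord k; nia.
have := h (Ordinal hp); rewrite /tot.
have e1 : Ordinal (tot_div_lt (Ordinal hp)) = k.
  by apply: val_inj => /=; rewrite divnMDl // divn_small // addn0.
have e2 : Ordinal (tot_rev_lt (tot_mod_lt (Ordinal hp))) = i.
  apply: val_inj => /=; rewrite modnMDl modn_small // subKn //.
  by rewrite -ltnS prednK.
by rewrite e1 e2.
Qed.

Lemma sumZ (I : finType) (P : pred I) (F : I -> nat) :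
  (\sum_(i | P i) Posz (F i))%R = Posz (\sum_(i | P i) F i)%N.
Proof. by rewrite (big_morph Posz PoszD (erefl _)). Qed.

Theorem lemma1p3 (l n m : nat) (hl : 1 < l) (hnm : m <= n) (hm : 1 <= m)
  (lam mu : lpart l n)
  (hlam : is_lpartition m lam) (hmu : is_lpartition m mu)
  (hnorm : lnorm lam = lnorm mu)
  (s : {perm 'I_(l * n)}) (hs : block_perm s) :
  (* lambda := s . lam^tot, and mu^tot \in lambda + Z^{nl}_+ *)
  Zplus (fun p => ((tot mu p)%:Z - (tot lam (s p))%:Z)%R) ->
  lle mu lam.
Proof.
move=> [[c hc] _].
have hd := @cone_of_prefix _ (fun p => ((tot lam (s p))%:Z - (tot lam p)%:Z)%R).
case: hd.
- move=> k; rewrite sumrB !sumZ subr_ge0 lez_nat.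
  apply: rearr => //; exact: tot_mono hlam.1.
- rewrite sumrB !sumZ; apply/eqP; rewrite subr_eq0 eqz_nat; apply/eqP.
  by rewrite [RHS](reindex_inj (@perm_inj _ s)); apply: eq_bigr => i _.
move=> cd hcd.
case: (boolP [forall p, tot mu p == tot lam p]).
- move/forallP => h; right; apply: tot_inj => p; apply/eqP; exact: h p.
- move/forallPn => [p hp]; left; right; split; first by rewrite hnorm.
  split.
  + exists (fun i j => (c i j + cd i j)%N) => q /=.
    have -> : ((tot mu q)%:Z - (tot lam q)%:Z =
       ((tot mu q)%:Z - (tot lam (s q))%:Z) + ((tot lam (s q))%:Z - (tot lam q)%:Z))%R.
      by rewrite addrA subrK.
    have := hc q; have := hcd q; rewrite /= => -> ->.
    rewrite -big_split /=; apply: eq_bigr => i _; rewrite -big_split /=.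
    by apply: eq_bigr => j _; rewrite PoszD mulrDl.
  + by exists p; rewrite /= subr_eq0 eqz_nat.
Qed.
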